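(* Assume Case 2 holds and $d>0$. Then: (1) if $l_1\le1$, then $c(Q^n)=\gamma_n+d^n$ for all $n\ge1$; (2) if $l_1>1$, then $l_1^{-1}\gamma_n+d^n\le c(Q^n)<\gamma_n+d^n$ for all $n\ge1$; (3) if $l_1>1$ and ($n_1>0$ or $s>2$), then $l_1^{-1}\gamma_n+d^n<c(Q^n)$ for all $n\ge1$. Suppose further that $l_1>1$, $n_1=0$ and $s=2$. Then: (4) if $\delta<T_{s-1}$, then $l_1^{-1}\gamma+d=c(q)$ and $l_1^{-1}\gamma_n+d^n<c(Q^n)$ for all $n\ge2$; (5) if $\delta=T_{s-1}$, then $l_1^{-1}\gamma_n+d^n=c(Q^n)$ for all $n\ge1$.
   Context: Let $f(z,w)=(p(z),q(z,w))$ be a holomorphic skew product germ at the origin of $\mathbb{C}^2$ with $f(0,0)=(0,0)$, where $p(z)=a_\delta z^\delta+O(z^{\delta+1})$ with $a_\delta\neq0$ and integer $\delta\ge1$, and $q(z,w)=\sum_{i+j\ge1}b_{ij}z^iw^j$ is not identically zero. For $n\ge1$ write $f^n=(p^n,Q^n)$. For a nonzero germ $g=\sum g_{ij}z^iw^j$ let $c(g)=\min\{i+j:g_{ij}\neq0\}$. The Newton polygon $N(g)$ is the convex hull of $\bigcup_{g_{ij}\neq0}\{(x,y):x\ge i,\ y\ge j\}$. Let $(n_1,m_1),\dots,(n_s,m_s)$ be the vertices of $N(q)$ with $n_1<\cdots<n_s$, $m_1>\cdots>m_s$; for $1\le k\le s-1$ let $T_k$ be the $y$-intercept of the line through $(n_k,m_k)$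 and $(n_{k+1},m_{k+1})$. Case 2 means: $s>1$ and $\delta\le T_{s-1}$; set $(\gamma,d)=(n_s,m_s)$ and $l_1=\frac{n_s-n_{s-1}}{m_{s-1}-m_s}$. Define $\gamma_n=\gamma(\delta^{n-1}+\delta^{n-2}d+\cdots+d^{n-1})$. *)

(* Defs.v *)
From mathcomp Require Import all_boot all_order all_algebra.
From mathcomp Require Export reals complex.
Set Implicit Arguments. Unset Strict Implicit. Unset Printing Implicit Defensive.
Import Order.TTheory GRing.Theory Num.Theory.
Local Open Scope ring_scope.

Section Germs.
Variable R : realType.
Local Notation C := (R[i]).

(* A (formal) power series in (z,w): [g i j] is the coefficient of z^i w^j. *)
Definition ser := nat -> nat -> C.

(* Holomorphic germ = convergent power series (coefficients bounded by M r^-(i+j)). *)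
Definition convergent2 (g : ser) : Prop :=
  exists r : R, 0 < r /\ exists M : R,
    forall i j, `|g i j| * ((r ^+ (i + j))%:C)%C <= (M%:C)%C.

Definition convergent1 (p : nat -> C) : Prop :=
  exists r : R, 0 < r /\ exists M : R,
    forall i, `|p i| * ((r ^+ i)%:C)%C <= (M%:C)%C.

Definition ser_one : ser := fun i j => ((i == 0%N) && (j == 0%N))%:R.
Definition ser_z : ser := fun i j => ((i == 1%N) && (j == 0%N))%:R.
Definition ser_w : ser := fun i j => ((i == 0%N) && (j == 1%N))%:R.

Definition ser_mul (A B : ser) : ser := fun i j =>
  \sum_(k < i.+1) \sum_(l < j.+1) A k l * B (i - k)%N (j - l)%N.

Definition ser_pow (A : ser) (n : nat) : ser := iter n (ser_mul A) ser_one.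

(* Formal substitution g(A(z,w), B(z,w)), for A, B without constant term
   (then A^k B^l has order >= k + l, so only k, l <= i + j contribute to
   the coefficient of z^i w^j). *)
Definition ser_comp (g A B : ser) : ser := fun i j =>
  \sum_(k < (i + j).+1) \sum_(l < (i + j).+1)
     g k l * ser_mul (ser_pow A k) (ser_pow B l) i j.

Definition lift_z (p : nat -> C) : ser := fun i j => if j == 0%N then p i else 0.

(* f^n = (p^n, Q^n) for f = (p, q):  f^0 = id, f^(n+1) = f o f^n. *)
Fixpoint skew_iter (p : nat -> C) (q : ser) (n : nat) : ser * ser :=
  match n with
  | 0 => (ser_z, ser_w)
  | n'.+1 => let F := skew_iter p q n' in
             (ser_comp (lift_z p) F.1 F.2, ser_comp q F.1 F.2)
  end.

Definition Qn (p : nat -> C) (q : ser) (n : nat) : ser := (skew_iter p q n).2.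

Definition is_order (g : ser) (c : nat) : Prop :=
  (exists i j, (i + j)%N = c /\ g i j != 0) /\
  (forall i j, g i j != 0 -> (c <= i + j)%N).

(* Newton polygon N(g) ⊂ R^2: convex hull of the union of the quadrants
   {x >= i, y >= j} over the support of g. *)
Definition in_newton (g : ser) (x y : R) : Prop :=
  exists (n : nat) (pt : 'I_n -> nat * nat) (lam : 'I_n -> R),
    [/\ forall k, 0 <= lam k,
        \sum_k lam k = 1,
        forall k, g (pt k).1 (pt k).2 != 0,
        \sum_k lam k * ((pt k).1)%:R <= x &
        \sum_k lam k * ((pt k).2)%:R <= y].

Definition is_vertex (g : ser) (x y : R) : Prop :=
  in_newton g x y /\
  forall (x1 y1 x2 y2 t : R), in_newton g x1 y1 -> in_newton g x2 y2 ->
    0 < t < 1 -> x = t * x1 + (1 - t) * x2 -> y = t * y1 + (1 - t) * y2 ->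
    x1 = x2 /\ y1 = y2.

End Germs.

(* vs = [:: (n_1,m_1); ...; (n_s,m_s)] ; indices are 1-based as in the paper. *)
Definition vn (vs : seq (nat * nat)) (k : nat) : nat := (nth (0, 0)%N vs k.-1).1.
Definition vm (vs : seq (nat * nat)) (k : nat) : nat := (nth (0, 0)%N vs k.-1).2.

(* T_k: y-intercept of the line through (n_k,m_k) and (n_{k+1},m_{k+1}). *)
Definition Tk (vs : seq (nat * nat)) (k : nat) : rat :=
  (vm vs k)%:R + (vn vs k)%:R * ((vm vs k)%:R - (vm vs k.+1)%:R)
                 / ((vn vs k.+1)%:R - (vn vs k)%:R).

Definition l1 (vs : seq (nat * nat)) : rat :=
  let s := size vs in
  ((vn vs s)%:R - (vn vs s.-1)%:R) / ((vm vs s.-1)%:R - (vm vs s)%:R).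

Definition gamma_n (gamma delta d n : nat) : nat :=
  (gamma * \sum_(i < n) delta ^ (n.-1 - i) * d ^ i)%N.

(* Main.v *)
Require Import Defs.
From mathcomp Require Import all_boot all_order all_algebra.
From mathcomp Require Import reals complex.
From mathcomp Require Import zify ring lra.
Import Order.TTheory GRing.Theory Num.Theory.
Local Open Scope ring_scope.
Set Implicit Arguments. Unset Strict Implicit. Unset Printing Implicit Defensive.


Section LexOrder.
Variables w1 w2 : nat.
Hypothesis w2P : (0 < w2)%N.

Definition phi i j := (w1 * i + w2 * j)%N.
Definition lexle i j i' j' : Prop :=
  (phi i j < phi i' j')%N \/ (phi i j = phi i' j' /\ (i <= i')%N).

Lemma lexle_refl i j : lexle i j i j.
Proof. by right; split. Qed.

Lemma lexle_phi i j k l : lexle i j k l -> (phi i j <= phi k l)%N.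
Proof. by case=> [/ltnW|[->]]. Qed.

Lemma lexle_trans i j k l m n : lexle i j k l -> lexle k l m n -> lexle i j m n.
Proof. rewrite /lexle; lia. Qed.

Lemma lexle_add i j k l i' j' k' l' : lexle i j k l -> lexle i' j' k' l' ->
  lexle (i + i') (j + j') (k + k') (l + l').
Proof. rewrite /lexle /phi !mulnDr; lia. Qed.

Lemma phi_inj i j k l : phi i j = phi k l -> i = k -> j = l.
Proof.
rewrite /phi => H ik; subst k; apply/eqP; rewrite -(eqn_pmul2l w2P); apply/eqP; lia.
Qed.

Lemma lexle_antisym i j k l : lexle i j k l -> lexle k l i j -> i = k /\ j = l.
Proof.
move=> H1 H2; have e : phi i j = phi k l by rewrite /lexle in H1 H2; lia.
have ik : i = k by rewrite /lexle in H1 H2; lia.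
by split => //; apply: phi_inj e ik.
Qed.

Lemma lexle_cancel i j k l i' j' k' l' : lexle i j k l -> lexle i' j' k' l' ->
  (k + k' = i + i')%N -> (l + l' = j + j')%N -> k = i /\ l = j.
Proof.
move=> H1 H2 e1 e2.
have ep : (phi k l + phi k' l' = phi i j + phi i' j')%N.
  by rewrite /phi; nia.
have ki : k = i by rewrite /lexle in H1 H2; lia.
split => //; symmetry; apply: (@phi_inj i j k l) => //.
rewrite /lexle in H1 H2; lia.
Qed.

End LexOrder.


Section Series.
Variable R : realType.
Local Notation C := (R[i]).
Variables w1 w2 : nat.
Hypothesis w2P : (0 < w2)%N.

Definition isLM (A : ser R) i j :=
  A i j != 0 /\ forall k l, A k l != 0 -> lexle w1 w2 i j k l.

Lemma sum_nz n (F : nat -> C) : \sum_(i < n) F i != 0 -> exists i, (i < n)%N /\ F i != 0.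
Proof.
move=> H; apply: boolp.contrapT => H2; move/negP: H; apply; apply/eqP.
apply: big1 => i _; apply/eqP; apply: boolp.contrapT => Hi; apply: H2.
by exists i; split => //; apply/negP.
Qed.

Lemma sum_single n (F : nat -> C) i0 : (i0 < n)%N ->
  (forall i, (i < n)%N -> i != i0 -> F i = 0) -> \sum_(i < n) F i = F i0.
Proof.
move=> lt0 H; rewrite (bigD1 (Ordinal lt0)) //= big1 ?addr0 // => i /= ne.
by apply: H => //; apply: contra ne => /eqP e; apply/eqP/val_inj.
Qed.

Lemma mul_supp (A B : ser R) i j : ser_mul A B i j != 0 ->
  exists k l, [/\ (k <= i)%N, (l <= j)%N, A k l != 0 & B (i - k)%N (j - l)%N != 0].
Proof.
rewrite /ser_mul => /(@sum_nz _ (fun k => \sum_(l < j.+1) A k l * B (i - k)%N (j - l)%N)).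
move=> [k [ki /(@sum_nz _ (fun l => A k l * B (i - k)%N (j - l)%N)) [l [lj H]]]].
exists k, l; split; rewrite ?(ltnSE ki) ?(ltnSE lj) //.
  by apply: contraNneq H => ->; rewrite mul0r.
by apply: contraNneq H => ->; rewrite mulr0.
Qed.

Lemma LM_mul (A B : ser R) a b c e : isLM A a b -> isLM B c e ->
  isLM (ser_mul A B) (a + c) (b + e) /\ ser_mul A B (a + c)%N (b + e)%N = A a b * B c e.
Proof.
move=> [Aab HA] [Bce HB].
have key : forall k l, (k <= a + c)%N -> (l <= b + e)%N ->
    A k l != 0 -> B (a + c - k)%N (b + e - l)%N != 0 -> k = a /\ l = b.
  move=> k l k1 l1 Ak Bk.
  apply: (@lexle_cancel w1 w2 w2P a b k l c e (a + c - k) (b + e - l)).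
  - exact: HA. - exact: HB. - lia. - lia.
have coef : ser_mul A B (a + c)%N (b + e)%N = A a b * B c e.
  rewrite /ser_mul (@sum_single _ (fun k => \sum_(l < (b + e).+1) A k l * B (a + c - k)%N (b + e - l)%N) a) ?ltnS ?leq_addr //; last first.
    move=> k kl ka; apply: big1 => l _.
    have [->|Ak] := eqVneq (A k l) 0; first by rewrite mul0r.
    have [->|Bk] := eqVneq (B (a + c - k)%N (b + e - l)%N) 0; first by rewrite mulr0.
    exfalso; have [ka' _] := key k l (ltnSE kl) (ltnSE (ltn_ord l)) Ak Bk.
    by rewrite ka' eqxx in ka.
  rewrite (@sum_single _ (fun l => A a l * B (a + c - a)%N (b + e - l)%N) b) ?ltnS ?leq_addr //; last first.
    move=> l ll lb.
    have [->|Ak] := eqVneq (A a l) 0; first by rewrite mul0r.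
    have [->|Bk] := eqVneq (B (a + c - a)%N (b + e - l)%N) 0; first by rewrite mulr0.
    exfalso; have [_ lb'] := key a l (leq_addr _ _) (ltnSE ll) Ak Bk.
    by rewrite lb' eqxx in lb.
  by rewrite !addKn.
split => //; split; first by rewrite coef mulf_neq0.
move=> i j /mul_supp [k [l [ki lj Ak Bk]]].
have := lexle_add w2P (HA _ _ Ak) (HB _ _ Bk).
by rewrite !subnKC.
Qed.

Lemma LM_one : isLM (ser_one R) 0 0.
Proof.
split; first by rewrite /ser_one /= oner_neq0.
move=> k l H; have [-> ->] : k = 0%N /\ l = 0%N.
  by move: H; rewrite /ser_one; case: k=>[|k]; case: l=>[|l] //=; rewrite eqxx.
exact: lexle_refl.
Qed.

Lemma LM_pow (A : ser R) a b n : isLM A a b -> isLM (ser_pow A n) (n * a) (n * b).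
Proof.
move=> HA; elim: n => [|n IH]; first by rewrite !mul0n; exact: LM_one.
rewrite /ser_pow iterS -/(ser_pow A n) !mulSn.
by case: (LM_mul HA IH).
Qed.

End Series.



Lemma ex_min_prop (P : nat -> Prop) : (exists n, P n) ->
  exists n, P n /\ forall m, P m -> (n <= m)%N.
Proof.
move=> [n Pn].
suff: forall N n, (n <= N)%N -> P n -> exists n, P n /\ forall m, P m -> (n <= m)%N.
  by move=> /(_ n n (leqnn n) Pn).
elim => [|N IH] {n Pn} n nN Pn.
  by exists n; split => // m _; move: nN; rewrite leqn0 => /eqP ->.
case: (boolp.EM (exists m, (m < n)%N /\ P m)) => [[m [mn Pm]]|H].
  by apply: (IH m) => //; lia.
exists n; split => // m Pm; case: (leqP n m) => // mn.
by exfalso; apply: H; exists m.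
Qed.

Lemma lexmin (S : nat -> nat -> Prop) (f1 f2 : nat -> nat -> nat) :
  (exists i j, S i j) -> exists i j, S i j /\ forall k l, S k l ->
    (f1 i j < f1 k l)%N \/ (f1 i j = f1 k l /\ (f2 i j <= f2 k l)%N).
Proof.
move=> [i [j Sij]].
have [m1 [[i1 [j1 [S1 e1]]] H1]] :=
  @ex_min_prop (fun N => exists i j, S i j /\ f1 i j = N) (ex_intro _ _ (ex_intro _ i (ex_intro _ j (conj Sij erefl)))).
have [m2 [[i2 [j2 [S2 [e2 e2']]]] H2]] :=
  @ex_min_prop (fun N => exists i j, S i j /\ f1 i j = m1 /\ f2 i j = N)
   (ex_intro _ _ (ex_intro _ i1 (ex_intro _ j1 (conj S1 (conj e1 erefl))))).
exists i2, j2; split => // k l Skl.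
have := H1 (f1 k l) (ex_intro _ k (ex_intro _ l (conj Skl erefl))).
rewrite leq_eqVlt => /orP [/eqP e|lt]; last by left; rewrite e2.
right; split; first by rewrite e2.
by rewrite e2'; apply: H2; exists k, l; split => //; split; rewrite ?e.
Qed.

Section Comp.
Variable R : realType.
Variables w1 w2 : nat.
Hypothesis w2P : (0 < w2)%N.

Lemma LM_comp (g A B : ser R) eA xB yB i0 j0 :
 (0 < eA)%N -> (0 < yB)%N -> isLM w1 w2 A eA 0 -> isLM w1 w2 B xB yB -> g i0 j0 != 0 ->
 (forall k l, g k l != 0 -> lexle w1 w2 (i0*eA + j0*xB) (j0*yB) (k*eA + l*xB) (l*yB)) ->
 isLM w1 w2 (ser_comp g A B) (i0*eA + j0*xB) (j0*yB).
Proof.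
move=> eP yP HA HB g0 Hmin.
have LMkl : forall k l, isLM w1 w2 (ser_mul (ser_pow A k) (ser_pow B l)) (k*eA + l*xB) (l*yB).
  move=> k l; have := (LM_mul w2P (LM_pow w2P k HA) (LM_pow w2P l HB)).1.
  by rewrite muln0 add0n.
split; last first.
  move=> i j; rewrite /ser_comp.
  move=> /(@sum_nz _ _ (fun k => \sum_(l < (i + j).+1) g k l * ser_mul (ser_pow A k) (ser_pow B l) i j)).
  move=> [k [_ /(@sum_nz _ _ (fun l => g k l * ser_mul (ser_pow A k) (ser_pow B l) i j)) [l [_ H]]]].
  have gkl : g k l != 0 by apply: contraNneq H => ->; rewrite mul0r.
  have Hm : ser_mul (ser_pow A k) (ser_pow B l) i j != 0 by apply: contraNneq H => ->; rewrite mulr0.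
  have T1 := Hmin _ _ gkl. have T2 := (LMkl k l).2 _ _ Hm. exact: (lexle_trans w2P T1 T2).
set X := (i0 * eA + j0 * xB)%N; set Y := (j0 * yB)%N.
have key : forall k l, g k l != 0 -> ser_mul (ser_pow A k) (ser_pow B l) X Y != 0 -> k = i0 /\ l = j0.
  move=> k l gkl Hm.
  have [e1 e2] := lexle_antisym w2P (Hmin _ _ gkl) ((LMkl k l).2 _ _ Hm).
  have lj : l = j0 by apply/eqP; rewrite -(eqn_pmul2r yP); apply/eqP.
  subst l; split => //; apply/eqP; rewrite -(eqn_pmul2r eP); apply/eqP; lia.
rewrite /ser_comp (@sum_single _ _ (fun k => \sum_(l < (X + Y).+1) g k l * ser_mul (ser_pow A k) (ser_pow B l) X Y) i0); last first.
- move=> k _ ki; apply: big1 => l _.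
  have [->|gkl] := eqVneq (g k l) 0; first by rewrite mul0r.
  have [->|Hm] := eqVneq (ser_mul (ser_pow A k) (ser_pow B l) X Y) 0; first by rewrite mulr0.
  by have [e _] := key k l gkl Hm; rewrite e eqxx in ki.
- rewrite /X /Y ltnS; nia.
rewrite (@sum_single _ _ (fun l => g i0 l * ser_mul (ser_pow A i0) (ser_pow B l) X Y) j0); last first.
- move=> l _ lj.
  have [->|gkl] := eqVneq (g i0 l) 0; first by rewrite mul0r.
  have [->|Hm] := eqVneq (ser_mul (ser_pow A i0) (ser_pow B l) X Y) 0; first by rewrite mulr0.
  by have [_ e] := key i0 l gkl Hm; rewrite e eqxx in lj.
- rewrite /X /Y ltnS; nia.
by rewrite mulf_neq0 // (LMkl i0 j0).1.
Qed.

End Comp.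



Lemma lexle_of_le w1 w2 i j k l : j = l -> (i <= k)%N -> lexle w1 w2 i j k l.
Proof.
move=> -> ik; rewrite /lexle /phi.
have : (w1 * i <= w1 * k)%N by rewrite leq_mul2l ik orbT.
lia.
Qed.

Lemma LM_uniq R w1 w2 (A : ser R) a b a' b' : (0 < w2)%N ->
  isLM w1 w2 A a b -> isLM w1 w2 A a' b' -> a = a' /\ b = b'.
Proof.
move=> w2P [H1 H2] [H3 H4]; exact: (lexle_antisym w2P (H2 _ _ H3) (H4 _ _ H1)).
Qed.

Section Iter.
Variable R : realType.
Variables (p : nat -> R[i]) (q : ser R) (delta : nat).
Hypotheses (dP : (1 <= delta)%N) (p0 : forall i, (i < delta)%N -> p i = 0)
  (pd : p delta != 0) (qne : exists i j, q i j != 0)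
  (qj : forall i j, q i j != 0 -> (1 <= j)%N).
Variables w1 w2 : nat.
Hypothesis w2P : (0 < w2)%N.

Local Notation P n := (skew_iter p q n).1.
Local Notation Q n := (skew_iter p q n).2.

Lemma LM_z : isLM w1 w2 (ser_z R) 1 0.
Proof.
split; first by rewrite /ser_z /= oner_neq0.
move=> k l H; have [-> ->] : k = 1%N /\ l = 0%N.
  by move: H; rewrite /ser_z; case: k=>[|[|k]]; case: l=>[|l] //=; rewrite ?eqxx.
exact: lexle_refl.
Qed.

Lemma LM_w : isLM w1 w2 (ser_w R) 0 1.
Proof.
split; first by rewrite /ser_w /= oner_neq0.
move=> k l H; have [-> ->] : k = 0%N /\ l = 1%N.
  by move: H; rewrite /ser_w; case: k=>[|k]; case: l=>[|[|l]] //=; rewrite ?eqxx.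
exact: lexle_refl.
Qed.

Lemma LM_P_step n X Y : isLM w1 w2 (P n) (delta ^ n) 0 -> isLM w1 w2 (Q n) X Y -> (0 < Y)%N ->
  isLM w1 w2 (P n.+1) (delta ^ n.+1) 0.
Proof.
move=> HP HQ Yp.
have eP : (0 < delta ^ n)%N by rewrite expn_gt0 dP.
have := @LM_comp R w1 w2 w2P (lift_z p) (P n) (Q n) (delta ^ n) X Y delta 0 eP Yp HP HQ.
rewrite mul0n addn0 -expnS /= => H; apply: H.
  by rewrite /lift_z /=.
move=> k l; rewrite /lift_z; case: (eqVneq l 0%N) => [->|ln]; last by rewrite eqxx.
move=> pk; apply: lexle_of_le; first by rewrite !mul0n.
rewrite mul0n addn0 expnS leq_mul2r; case: (leqP delta k) => [dk|/p0 e]; first by apply/orP; right.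
by rewrite e eqxx in pk.
Qed.

Lemma LM_Q_step n X Y : isLM w1 w2 (P n) (delta ^ n) 0 -> isLM w1 w2 (Q n) X Y -> (0 < Y)%N ->
  exists i0 j0, q i0 j0 != 0 /\ isLM w1 w2 (Q n.+1) (i0 * delta ^ n + j0 * X) (j0 * Y) /\
    forall k l, q k l != 0 -> lexle w1 w2 (i0 * delta ^ n + j0 * X) (j0 * Y) (k * delta ^ n + l * X) (l * Y).
Proof.
move=> HP HQ Yp.
have eP : (0 < delta ^ n)%N by rewrite expn_gt0 dP.
have [i0 [j0 [q0 Hm]]] := @lexmin (fun k l => q k l != 0)
   (fun k l => phi w1 w2 (k * delta ^ n + l * X) (l * Y)) (fun k l => k * delta ^ n + l * X)%N qne.
exists i0, j0; split => //.
have Hm' : forall k l, q k l != 0 -> lexle w1 w2 (i0 * delta ^ n + j0 * X) (j0 * Y) (k * delta ^ n + l * X) (l * Y).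
  by move=> k l /Hm.
split => //.
exact: (@LM_comp R w1 w2 w2P q (P n) (Q n) (delta ^ n) X Y i0 j0 eP Yp HP HQ q0 Hm').
Qed.

Lemma LM_iter n : isLM w1 w2 (P n) (delta ^ n) 0 /\ exists X Y, isLM w1 w2 (Q n) X Y /\ (0 < Y)%N.
Proof.
elim: n => [|n [HP [X [Y [HQ Yp]]]]].
  by split; [exact: LM_z | exists 0%N, 1%N; split => //; exact: LM_w].
split; first exact: (LM_P_step HP HQ Yp).
have [i0 [j0 [q0 [H _]]]] := LM_Q_step HP HQ Yp.
exists (i0 * delta ^ n + j0 * X)%N, (j0 * Y)%N; split => //.
by rewrite muln_gt0 Yp (qj q0).
Qed.

Lemma val_rec n X Y X' Y' : isLM w1 w2 (Q n) X Y -> isLM w1 w2 (Q n.+1) X' Y' ->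
  (exists i j, q i j != 0 /\ phi w1 w2 X' Y' = (i * (w1 * delta ^ n) + j * phi w1 w2 X Y)%N) /\
  (forall i j, q i j != 0 -> (phi w1 w2 X' Y' <= i * (w1 * delta ^ n) + j * phi w1 w2 X Y)%N).
Proof.
move=> HQ HQ'.
have [HP [X0 [Y0 [HQ0 Yp0]]]] := LM_iter n.
have [eX eY] := LM_uniq w2P HQ0 HQ; subst X0 Y0.
have [i0 [j0 [q0 [H Hm]]]] := LM_Q_step HP HQ Yp0.
have [eX eY] := LM_uniq w2P H HQ'; subst X' Y'.
have ph : forall k l, phi w1 w2 (k * delta ^ n + l * X) (l * Y) = (k * (w1 * delta ^ n) + l * phi w1 w2 X Y)%N.
  by move=> k l; rewrite /phi; ring.
split; first by exists i0, j0; split => //; rewrite ph.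
by move=> i j qij; rewrite -ph; apply: lexle_phi; apply: Hm.
Qed.

Lemma val_exists n : exists X Y, isLM w1 w2 (Q n) X Y.
Proof. by have [_ [X [Y [H _]]]] := LM_iter n; exists X, Y. Qed.

End Iter.

Lemma LM_order R (A : ser R) X Y : isLM 1 1 A X Y -> is_order A (X + Y).
Proof.
move=> [H1 H2]; split; first by exists X, Y.
move=> i j /H2 /lexle_phi; rewrite /phi !mul1n.
by [].
Qed.



Section Newton.
Variable R : realType.
Variable q : ser R.
Variables w1 w2 : nat.
Hypotheses (w1P : (0 < w1)%N) (w2P : (0 < w2)%N).

Lemma newton_bound i j :
 (forall k l, q k l != 0 -> (phi w1 w2 i j < phi w1 w2 k l)%N \/
     (phi w1 w2 i j = phi w1 w2 k l /\ (i <= k)%N)) ->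
 forall x y : R, in_newton q x y ->
   ((phi w1 w2 i j)%:R <= w1%:R * x + w2%:R * y) /\
   ((phi w1 w2 i j)%:R = w1%:R * x + w2%:R * y -> i%:R <= x).
Proof.
move=> Hm x y [n [pt [lam [l0 l1 Hs Hx Hy]]]].
set r : R := (phi w1 w2 i j)%:R.
set Sx := \sum_k lam k * ((pt k).1)%:R in Hx *.
set Sy := \sum_k lam k * ((pt k).2)%:R in Hy *.
set Sp := \sum_k lam k * (phi w1 w2 (pt k).1 (pt k).2)%:R.
have E : w1%:R * Sx + w2%:R * Sy = Sp.
  rewrite /Sx /Sy /Sp !mulr_sumr -big_split; apply: eq_bigr => k _.
  rewrite /phi natrD !natrM /=; ring.
have G0 : forall k, r <= (phi w1 w2 (pt k).1 (pt k).2)%:R.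
  move=> k; rewrite ler_nat.
  by case: (Hm _ _ (Hs k)) => [/ltnW|[-> _]].
have G : forall k, lam k * r <= lam k * (phi w1 w2 (pt k).1 (pt k).2)%:R.
  by move=> k; apply: ler_wpM2l => //; apply: G0.
have Hsum : r <= Sp.
  have -> : r = \sum_k lam k * r by rewrite -mulr_suml l1 mul1r.
  by apply: ler_sum => k _; apply: G.
have w1R : (0 : R) < w1%:R by rewrite ltr0n.
have w2R : (0 : R) < w2%:R by rewrite ltr0n.
have hx : w1%:R * Sx <= w1%:R * x by apply: ler_wpM2l => //; apply: ltW.
have hy : w2%:R * Sy <= w2%:R * y by apply: ler_wpM2l => //; apply: ltW.
split; first lra.
move=> Eq.
have SpE : Sp = r by lra.
have xE : w1%:R * (x - Sx) = 0 by lra.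
have xS : x = Sx.
  by move/eqP: xE; rewrite mulf_eq0 (gt_eqF w1R) /= subr_eq0 => /eqP.
have Z : \sum_k lam k * ((phi w1 w2 (pt k).1 (pt k).2)%:R - r) = 0.
  under eq_bigr do rewrite mulrBr.
  by rewrite sumrB -/Sp -mulr_suml l1 mul1r SpE subrr.
have G1 : forall k, 0 <= lam k * ((phi w1 w2 (pt k).1 (pt k).2)%:R - r).
  by move=> k; apply: mulr_ge0 => //; rewrite subr_ge0; apply: G0.
have T := psumr_eq0P (fun k _ => G1 k) Z.
rewrite xS.
have -> : (i%:R : R) = \sum_k lam k * i%:R by rewrite -mulr_suml l1 mul1r.
apply: ler_sum => k _.
have [->|lk] := eqVneq (lam k) 0; first by rewrite !mul0r.
apply: ler_wpM2l => //; rewrite ler_nat.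
have := T k isT; move/eqP; rewrite mulf_eq0 (negbTE lk) /= subr_eq0 eqr_nat => /eqP e.
by case: (Hm _ _ (Hs k)) => [|[]//]; rewrite e ltnn.
Qed.

Lemma min_vertex i j : q i j != 0 ->
 (forall k l, q k l != 0 -> (phi w1 w2 i j < phi w1 w2 k l)%N \/
     (phi w1 w2 i j = phi w1 w2 k l /\ (i <= k)%N)) ->
 is_vertex q i%:R j%:R.
Proof.
move=> qij Hm; split.
  exists 1%N, (fun _ => (i, j)), (fun _ => 1); split => //=.
  - by rewrite big_ord1.
  - by rewrite big_ord1 mul1r.
  - by rewrite big_ord1 mul1r.
move=> x1 y1 x2 y2 t N1 N2 /andP [t0 t1] ex ey.
have [b1 e1] := newton_bound Hm N1.
have [b2 e2] := newton_bound Hm N2.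
have w1R : (0 : R) < w1%:R by rewrite ltr0n.
have w2R : (0 : R) < w2%:R by rewrite ltr0n.
set r : R := (phi w1 w2 i j)%:R in b1 e1 b2 e2.
have rE : r = w1%:R * i%:R + w2%:R * j%:R by rewrite /r /phi natrD !natrM.
set v1 := w1%:R * x1 + w2%:R * y1 in b1 e1.
set v2 := w1%:R * x2 + w2%:R * y2 in b2 e2.
have tv : t * v1 + (1 - t) * v2 = r.
  by rewrite rE ex ey /v1 /v2; ring.
have p1 : 0 <= t * (v1 - r) by apply: mulr_ge0; lra.
have p2 : 0 <= (1 - t) * (v2 - r) by apply: mulr_ge0; lra.
have z1 : t * (v1 - r) = 0 by nra.
have z2 : (1 - t) * (v2 - r) = 0 by nra.
have hv1 : v1 = r.
  by move/eqP: z1; rewrite mulf_eq0 (gt_eqF t0) /= subr_eq0 => /eqP.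
have hv2 : v2 = r.
  move/eqP: z2; rewrite mulf_eq0 !subr_eq0 => /orP [/eqP t1'|/eqP //].
  by exfalso; lra.
have i1 := e1 (esym hv1).
have i2 := e2 (esym hv2).
have q1 : 0 <= t * (x1 - i%:R) by apply: mulr_ge0; lra.
have q2 : 0 <= (1 - t) * (x2 - i%:R) by apply: mulr_ge0; lra.
have zz1 : t * (x1 - i%:R) = 0 by nra.
have zz2 : (1 - t) * (x2 - i%:R) = 0 by nra.
have x1i : x1 = i%:R.
  by move/eqP: zz1; rewrite mulf_eq0 (gt_eqF t0) /= subr_eq0 => /eqP.
have x2i : x2 = i%:R.
  move/eqP: zz2; rewrite mulf_eq0 !subr_eq0 => /orP [/eqP t1'|/eqP //].
  by exfalso; lra.
split; first by rewrite x1i x2i.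
have : w2%:R * (y1 - y2) = 0.
  have : v1 = v2 by rewrite hv1 hv2.
  rewrite /v1 /v2 x1i x2i => h; lra.
by move/eqP; rewrite mulf_eq0 (gt_eqF w2R) /= subr_eq0 => /eqP.
Qed.

End Newton.



Section Conv.
Variable R : realType.
Variable q : ser R.

Lemma newton_up (x y x' y' : R) : in_newton q x y -> x <= x' -> y <= y' -> in_newton q x' y'.
Proof.
move=> [n [pt [lam [l0 l1 Hs Hx Hy]]]] xx yy.
exists n, pt, lam; split => //; [exact: le_trans Hx xx | exact: le_trans Hy yy].
Qed.

Lemma conv_contra (a b g d ux uy : nat) :
  (ux < a)%N -> (a < g)%N -> (d < b)%N ->
  is_vertex q a%:R b%:R -> in_newton q ux%:R uy%:R -> in_newton q g%:R d%:R ->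
  ((b - d) * ux + (g - a) * uy <= (b - d) * g + (g - a) * d)%N -> False.
Proof.
move=> ua ag db [_ Hv] Nu Ng H.
have H' : ((b%:R - d%:R) * ux%:R + (g%:R - a%:R) * uy%:R <= (b%:R - d%:R) * g%:R + (g%:R - a%:R) * d%:R :> R).
  by rewrite -!natrB ?(ltnW db) ?(ltnW ag) // -!natrM -!natrD ler_nat.
have uaR : (ux%:R < a%:R :> R) by rewrite ltr_nat.
have agR : (a%:R < g%:R :> R) by rewrite ltr_nat.
set t : R := (g%:R - a%:R) / (g%:R - ux%:R).
set Y2 : R := (b%:R * (g%:R - ux%:R) - (g%:R - a%:R) * uy%:R) / (a%:R - ux%:R).
have gu : g%:R - ux%:R != 0 :> R by apply: lt0r_neq0; lra.
have au : a%:R - ux%:R != 0 :> R by apply: lt0r_neq0; lra.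
have Y2d : d%:R <= Y2.
  rewrite /Y2 ler_pdivlMr; last by lra.
  nra.
have t0 : 0 < t by rewrite /t divr_gt0 //; lra.
have t1 : t < 1 by rewrite /t ltr_pdivrMr; lra.
have := Hv ux%:R uy%:R g%:R Y2 t Nu (newton_up Ng (lexx _) Y2d).
rewrite t0 t1 /= => /(_ isT).
case.
- by rewrite /t; field.
- by rewrite /t /Y2; field; rewrite au gu.
move=> e _; move: uaR agR; rewrite e; lra.
Qed.
End Conv.



Section Facts.
Variable R : realType.
Variable q : ser R.
Variable vs : seq (nat * nat).
Hypothesis qne : exists i j, q i j != 0.
Hypothesis Hsort : sorted (fun a b : nat * nat => (a.1 < b.1)%N && (b.2 < a.2)%N) vs.
Hypothesis HV : forall x y : R, is_vertex q x y <->
     exists2 v, v \in vs & x = (v.1)%:R /\ y = (v.2)%:R.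

Local Notation V k := (nth (0%N, 0%N) vs k).
Local Notation s := (size vs).

Lemma srt k k' : (k < k')%N -> (k' < s)%N -> ((V k).1 < (V k').1)%N /\ ((V k').2 < (V k).2)%N.
Proof.
move=> kk ks.
have tr : transitive (fun a b : nat * nat => (a.1 < b.1)%N && (b.2 < a.2)%N).
  move=> y x z /andP [h1 h2] /andP [h3 h4]; apply/andP; split; lia.
have := sorted_ltn_nth tr (0%N, 0%N) Hsort.
move=> /(_ k k'); rewrite !inE => /(_ (ltn_trans kk ks) ks kk) /andP [h1 h2]; by split.
Qed.

Lemma srt_le k k' : (k <= k')%N -> (k' < s)%N -> ((V k).1 <= (V k').1)%N /\ ((V k').2 <= (V k).2)%N.
Proof.
rewrite leq_eqVlt => /orP [/eqP -> //|kk ks].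
by have [h1 h2] := srt kk ks; split; apply: ltnW.
Qed.

Lemma in_vs v : v \in vs -> exists2 k, (k < s)%N & v = V k.
Proof. by move=> vin; exists (index v vs); [rewrite index_mem | rewrite nth_index]. Qed.

Lemma vs_newton k : (k < s)%N -> in_newton q (V k).1%:R (V k).2%:R.
Proof.
move=> ks; have : is_vertex q (V k).1%:R (V k).2%:R.
  by apply/HV; exists (V k) => //; apply: mem_nth.
by case.
Qed.

Lemma NEWT w1 w2 : (0 < w1)%N -> (0 < w2)%N ->
  exists k, [/\ (k < s)%N, q (V k).1 (V k).2 != 0,
   (forall i j, q i j != 0 -> (phi w1 w2 (V k).1 (V k).2 <= phi w1 w2 i j)%N) &
   (forall x y, in_newton q x y -> (phi w1 w2 (V k).1 (V k).2)%:R <= w1%:R * x + w2%:R * y)].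
Proof.
move=> w1P w2P.
have [i [j [qij Hm]]] := @lexmin (fun i j => q i j != 0) (phi w1 w2) (fun i j => i) qne.
have Hv := min_vertex w1P w2P qij Hm.
have [v vin [e1 e2]] := (HV _ _).1 Hv.
have [k ks ev] := in_vs vin.
have ei : i = v.1 by apply/eqP; rewrite -(eqr_nat R) e1.
have ej : j = v.2 by apply/eqP; rewrite -(eqr_nat R) e2.
exists k; rewrite -ev -ei -ej; split => //.
  by move=> k' l' /Hm [/ltnW|[-> _]].
by move=> x y /(newton_bound w1P w2P Hm) [].
Qed.


Hypothesis s1 : (1 < s)%N.
Local Notation G := (V s.-1).1.
Local Notation D := (V s.-1).2.
Local Notation A := (V s.-2).1.
Local Notation B := (V s.-2).2.

Lemma sm1 : (s.-1 < s)%N. Proof. by rewrite prednK //; lia. Qed.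
Lemma sm2 : (s.-2 < s.-1)%N. Proof. lia. Qed.
Lemma AG : (A < G)%N /\ (D < B)%N. Proof. exact: srt sm2 sm1. Qed.

Lemma V_ge k : (k < s)%N -> (D <= (V k).2)%N /\ ((V 0).1 <= (V k).1)%N.
Proof.
move=> ks; split; first by apply: (srt_le _ sm1).2; lia.
by apply: (srt_le _ ks).1.
Qed.

Lemma F1 i j : q i j != 0 -> (D <= j)%N.
Proof.
move=> qij; have [k [ks _ Hm _]] := @NEWT 1 i.+1 isT isT.
have := Hm _ _ qij; rewrite /phi.
have [h _] := V_ge ks.
case: (leqP D j) => // jD Hle; exfalso.
have : (i.+1 * j.+1 <= i.+1 * (V k).2)%N by rewrite leq_mul2l; lia.
nia.
Qed.

Lemma F4 i j : q i j != 0 -> ((V 0).1 <= i)%N.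
Proof.
move=> qij; have [k [ks _ Hm _]] := @NEWT j.+1 1 isT isT.
have := Hm _ _ qij; rewrite /phi.
have [_ h] := V_ge ks.
case: (leqP (V 0).1 i) => // iV Hle; exfalso.
have : (j.+1 * i.+1 <= j.+1 * (V k).1)%N by rewrite leq_mul2l; lia.
nia.
Qed.

Lemma F5 j : (V 0).1 = 0%N -> q 0 j != 0 -> ((V 0).2 <= j)%N.
Proof.
move=> v0 qij; have [k [ks _ Hm _]] := @NEWT j.+1 1 isT isT.
have := Hm _ _ qij; rewrite /phi muln0 add0n mul1n => Hle.
have vk : (V k).1 = 0%N.
  case: (posnP (V k).1) => // h; exfalso.
  have : (j.+1 * 1 <= j.+1 * (V k).1)%N by rewrite leq_mul2l.
  lia.
have k0 : k = 0%N.
  case: (posnP k) => // kp; have [h _] := srt kp ks; lia.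
subst k; lia.
Qed.

Lemma F3a : q G D != 0.
Proof.
have [k [ks qk Hm Hn]] := @NEWT 1 G.+1 isT isT.
have := Hn _ _ (vs_newton sm1); rewrite -!natrM -!natrD ler_nat /phi => Hle.
suff ek : k = s.-1 by rewrite -ek.
case: (ltngtP k s.-1) => // [kl|]; last by lia.
have [_ h] := srt kl sm1.
have : (G.+1 * D.+1 <= G.+1 * (V k).2)%N by rewrite leq_mul2l; lia.
nia.
Qed.

Lemma CONV k : (k < s.-2)%N ->
  ((B - D) * G + (G - A) * D < (B - D) * (V k).1 + (G - A) * (V k).2)%N.
Proof.
move=> ks.
have ks' : (k < s.-2)%N by [].
have [h1 h2] := srt ks' (ltn_trans sm2 sm1).
have [h3 h4] := AG.
rewrite ltnNge; apply/negP => H.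
apply: (@conv_contra R q A B G D (V k).1 (V k).2) => //.
- apply/HV; exists (V s.-2); [apply: mem_nth; exact: ltn_trans sm2 sm1 | by []].
- by apply: vs_newton; lia.
- exact: vs_newton sm1.
Qed.

Lemma edgeAB : ((B - D) * A + (G - A) * B = (B - D) * G + (G - A) * D)%N.
Proof. have [h3 h4] := AG. nia. Qed.

Lemma F2 i j : q i j != 0 ->
  ((B - D) * G + (G - A) * D <= (B - D) * i + (G - A) * j)%N.
Proof.
move=> qij; have [h3 h4] := AG.
have w1P : (0 < B - D)%N by lia.
have w2P : (0 < G - A)%N by lia.
have [k [ks _ Hm _]] := @NEWT (B - D) (G - A) w1P w2P.
apply: leq_trans (Hm _ _ qij); rewrite /phi.
case: (ltngtP k s.-2) => [kl|kg|->].
- exact: ltnW (CONV kl).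
- have -> : k = s.-1 by lia.
  by [].
- by rewrite edgeAB.
Qed.

Lemma F3b : q A B != 0.
Proof.
have [h3 h4] := AG.
set w1 := (B - D)%N; set w2 := (G - A)%N; set K := A.+1.
have w1P : (0 < w1 * K + 1)%N by lia.
have w2P : (0 < w2 * K)%N by rewrite muln_gt0 /w2 /K; lia.
have [k [ks qk Hm Hn]] := @NEWT (w1 * K + 1) (w2 * K) w1P w2P.
have := Hn _ _ (vs_newton (ltn_trans sm2 sm1)); rewrite -!natrM -!natrD ler_nat /phi => Hle.
suff ek : k = s.-2 by rewrite -ek.
have E : (w1 * A + w2 * B = w1 * G + w2 * D)%N by rewrite /w1 /w2 edgeAB.
case: (ltngtP k s.-2) => [kl|kg|//].
- have C := CONV kl; rewrite -/w1 -/w2 in C.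
  exfalso.
  have : ((w1 * G + w2 * D).+1 * K <= (w1 * (V k).1 + w2 * (V k).2) * K)%N by rewrite leq_mul2r C orbT.
  nia.
- have ek : k = s.-1 by lia.
  subst k; exfalso; nia.
Qed.

End Facts.



Lemma gamma_nS g de d n : gamma_n g de d n.+1 = (g * de ^ n + d * gamma_n g de d n)%N.
Proof.
rewrite /gamma_n big_ord_recl /= subn0 expn0 muln1 mulnDr; congr (_ + _)%N.
rewrite mulnCA; congr (_ * _)%N; rewrite big_distrr /=; apply: eq_bigr => i _.
rewrite /bump /= add1n expnS mulnCA; congr (_ * (_ * _))%N.
by case: n i => [[]//|n] i; rewrite subSS.
Qed.

Lemma gamma_n0 g de d : gamma_n g de d 0 = 0%N.
Proof. by rewrite /gamma_n big_ord0 muln0. Qed.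

Lemma hlpB A B C D : (A + B + C <= D)%N -> (0 < B)%N -> (A < D)%N.
Proof. lia. Qed.
Lemma hlpC A B C D : (A + B + C <= D)%N -> (0 < C)%N -> (A < D)%N.
Proof. lia. Qed.

Section NT.
Variables (de g d a b : nat) (S : nat -> nat -> Prop) (c : nat -> nat).
Hypotheses (ag : (a < g)%N) (db : (d < b)%N) (dP : (0 < d)%N) (deP : (0 < de)%N).
Local Notation w1 := (b - d)%N.
Local Notation w2 := (g - a)%N.
Local Notation E := (w1 * g + w2 * d)%N.
Hypothesis case2 : (w2 * de <= E)%N.
Hypotheses (SF1 : forall i j, S i j -> (d <= j)%N)
  (SF2 : forall i j, S i j -> (E <= w1 * i + w2 * j)%N)
  (Sgd : S g d) (Sab : S a b).
Hypotheses (c0 : c 0 = 1%N)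
  (crec1 : forall n, exists i j, S i j /\ c n.+1 = (i * de ^ n + j * c n)%N)
  (crec2 : forall n i j, S i j -> (c n.+1 <= i * de ^ n + j * c n)%N).

Local Notation gam n := (gamma_n g de d n).
Local Notation M n := (w1 * gam n + w2 * d ^ n)%N.

Lemma MS n : M n.+1 = (w1 * g * de ^ n + d * M n)%N.
Proof. rewrite gamma_nS expnS; nia. Qed.

Lemma J n : (w2 * de ^ n <= M n)%N.
Proof.
elim: n => [|n IH]; first by rewrite gamma_n0 !expn0 muln0.
rewrite MS expnS.
have h1 : (d * (w2 * de ^ n) <= d * M n)%N by rewrite leq_mul2l IH orbT.
have h2 : (w2 * de * de ^ n <= E * de ^ n)%N by rewrite leq_mul2r case2 orbT.
nia.
Qed.

Lemma CORE n i j : S i j -> (w1 * g * de ^ n + d * M n <= w1 * i * de ^ n + j * M n)%N.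
Proof.
move=> Sij; have jd := SF1 Sij; have e := SF2 Sij.
have hJ := J n.
have h1 : ((j - d) * (w2 * de ^ n) <= (j - d) * M n)%N by rewrite leq_mul2l hJ orbT.
have h2 : (E * de ^ n <= (w1 * i + w2 * j) * de ^ n)%N by rewrite leq_mul2r e orbT.
have -> : j = (d + (j - d))%N by lia.
set j' := (j - d)%N in h1 *.
nia.
Qed.

Lemma gam1 : gam 1 = g.
Proof. by rewrite gamma_nS gamma_n0 expn0 muln1 muln0 addn0. Qed.

Lemma claim1 : (w2 <= w1)%N -> forall n, c n = (gam n + d ^ n)%N.
Proof.
move=> w21; elim => [|n IH]; first by rewrite c0 gamma_n0.
apply/eqP; rewrite eqn_leq; apply/andP; split.
  have := crec2 n Sgd; rewrite IH gamma_nS expnS; nia.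
have [i [j [Sij ->]]] := crec1 n.
have h := CORE n Sij; have jd := SF1 Sij.
have w1P : (0 < w1)%N by lia.
rewrite IH gamma_nS expnS.
have h2 : (M n <= w1 * (gam n + d ^ n))%N.
  by rewrite mulnDr leq_add2l leq_mul2r w21 orbT.
have h3 : ((j - d) * M n <= (j - d) * (w1 * (gam n + d ^ n)))%N by rewrite leq_mul2l h2 orbT.
rewrite -(leq_pmul2l w1P).
have -> : j = (d + (j - d))%N by lia.
set j' := (j - d)%N in h3 *.
set X := (gam n + d ^ n)%N in h2 h3 *.
nia.
Qed.

Lemma STEP n i j : (w1 <= w2)%N -> S i j -> (M n <= w2 * c n)%N ->
  (M n.+1 + (w2 - w1) * i * de ^ n + j * (w2 * c n - M n) <= w2 * (i * de ^ n + j * c n))%N.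
Proof.
move=> w12 Sij IH; have h := CORE n Sij; rewrite MS.
have h2 : (j * M n <= j * (w2 * c n))%N by rewrite leq_mul2l IH orbT.
nia.
Qed.

Lemma claim2lo : (w1 <= w2)%N -> forall n, (M n <= w2 * c n)%N.
Proof.
move=> w12; elim => [|n IH]; first by rewrite c0 gamma_n0 muln0 add0n expn0.
have [i [j [Sij ->]]] := crec1 n.
by move: (STEP w12 Sij IH); apply: leq_trans; rewrite -addnA leq_addr.
Qed.

Lemma claim2hi : (w1 < w2)%N -> forall n, (0 < n)%N -> (c n < gam n + d ^ n)%N.
Proof.
move=> w12; elim => [//|n IH] _.
case: n IH => [_|n IH].
  have := crec2 0 Sab; rewrite c0 expn0 gam1 !muln1 expn1; lia.
have := crec2 n.+1 Sgd; have := IH isT; rewrite (gamma_nS g de d n.+1) (expnS d n.+1).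
move=> h1 h2.
have : (d * c n.+1 < d * (gam n.+1 + d ^ n.+1))%N by rewrite ltn_pmul2l.
set X := gam n.+1 in h1 h2 *. set Y := (d ^ n.+1)%N in h1 h2 *. set Z := c n.+1 in h1 h2 *.
lia.
Qed.

Lemma claim3 : (w1 < w2)%N -> (forall j, S 0 j -> (E < w2 * j)%N) ->
  forall n, (0 < n)%N -> (M n < w2 * c n)%N.
Proof.
move=> w12 H0; elim => [//|n IH] _.
have [i [j [Sij ->]]] := crec1 n.
have jP : (0 < j)%N by have := SF1 Sij; lia.
have lo := claim2lo (ltnW w12) n.
have st := STEP (ltnW w12) Sij lo.
case: n IH lo st => [_|n IH] lo st.
  case: (posnP i) => [i0|ip].
    subst i; move: (H0 _ Sij); rewrite gam1 expn1 c0 !mul0n add0n muln1; lia.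
  apply: hlpB st _; by rewrite expn0 muln1 muln_gt0 ip; lia.
have := IH isT => lt.
apply: hlpC st _; by rewrite muln_gt0 jP; lia.
Qed.

Lemma claim4 : (w1 < w2)%N -> a = 0%N -> (w2 * de < E)%N ->
  E = (w2 * c 1)%N /\ forall n, (1 < n)%N -> (M n < w2 * c n)%N.
Proof.
move=> w12' a0 lt.
have w12 := ltnW w12'.
have c1b : c 1 = b.
  have h1 := crec2 0 Sab; rewrite a0 c0 mul0n add0n muln1 in h1.
  have h2 := claim2lo w12 1; rewrite gam1 expn1 in h2.
  subst a; rewrite subn0 in h2 *; apply/eqP; rewrite eqn_leq h1 /=.
  rewrite -(@leq_pmul2l g) //; nia.
have EE : E = (w2 * b)%N by subst a; rewrite subn0; nia.
split; first by rewrite c1b.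
elim => [//|n IH] n1.
have [i [j [Sij ->]]] := crec1 n.
have jP : (0 < j)%N by have := SF1 Sij; lia.
have lo := claim2lo w12 n.
have st := STEP w12 Sij lo.
case: n IH n1 lo st => [//|n IH] n1 lo st.
case: n IH n1 lo st => [_|n IH] n1 lo st.
  rewrite c1b; rewrite c1b in lo st.
  case: (posnP i) => [i0|ip].
    subst i.
    have jb : (b <= j)%N.
      have := SF2 Sij; rewrite EE muln0 add0n leq_pmul2l //; lia.
    rewrite MS gam1 expn1 expn1 -/E EE.
    have w1P : (0 < w1)%N by lia.
    have h : (w1 * g * de < w1 * (w2 * b))%N.
      by rewrite -mulnA ltn_pmul2l // -EE; move: lt; rewrite a0 subn0.
    have h2 : (b * (w2 * b) <= j * (w2 * b))%N by rewrite leq_mul2r jb orbT.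
    nia.
  apply: hlpB st _.
  rewrite expn1 !muln_gt0 ip deP andbT; subst a; rewrite subn0.
  move: lt; rewrite subn0 => lt.
  nia.
have := IH isT => lt'.
apply: hlpC st _; by rewrite muln_gt0 jP; lia.
Qed.

Lemma claim5 : a = 0%N -> (w2 * de = E)%N -> (w1 < w2)%N ->
  forall n, M n = (w2 * c n)%N.
Proof.
move=> a0 eq w12.
have EE : E = (w2 * b)%N by subst a; rewrite subn0; nia.
have deb : de = b.
  apply/eqP; rewrite -(@eqn_pmul2l w2); last by lia.
  by rewrite eq EE.
have cle : forall n, (c n <= b ^ n)%N.
  elim => [|n IH]; first by rewrite c0.
  have := crec2 n Sab; rewrite a0 mul0n add0n expnS => h.
  apply: leq_trans h _; by rewrite leq_mul2l IH orbT.
have Mn : forall n, M n = (w2 * b ^ n)%N.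
  elim => [|n IH]; first by rewrite gamma_n0 muln0 add0n.
  rewrite MS IH deb expnS.
  have : (w1 * g + w2 * d = w2 * b)%N by [].
  nia.
move=> n; apply/eqP; rewrite eqn_leq claim2lo ?(ltnW w12) // Mn leq_mul2l.
by rewrite cle orbT.
Qed.

End NT.


Unset Implicit Arguments. Set Strict Implicit. Set Printing Implicit Defensive.

Lemma ratE (u v x y : nat) : (0 < u)%N -> (0 < v)%N ->
  ((v%:R / u%:R)^-1 * x%:R + y%:R : rat) = (u * x + v * y)%:R / v%:R.
Proof.
move=> uP vP; have u0 : (u%:R : rat) != 0 by rewrite pnatr_eq0 -lt0n.
have v0 : (v%:R : rat) != 0 by rewrite pnatr_eq0 -lt0n.
rewrite natrD !natrM; field; by rewrite u0 v0.
Qed.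

Lemma qrat_le (u v x y c : nat) : (0 < u)%N -> (0 < v)%N ->
  ((v%:R / u%:R)^-1 * x%:R + y%:R <= c%:R :> rat) = (u * x + v * y <= v * c)%N.
Proof.
by move=> uP vP; rewrite ratE // ler_pdivrMr ?ltr0n // -natrM ler_nat (mulnC c).
Qed.

Lemma qrat_lt (u v x y c : nat) : (0 < u)%N -> (0 < v)%N ->
  ((v%:R / u%:R)^-1 * x%:R + y%:R < c%:R :> rat) = (u * x + v * y < v * c)%N.
Proof.
by move=> uP vP; rewrite ratE // ltr_pdivrMr ?ltr0n // -natrM ltr_nat (mulnC c).
Qed.

Lemma qrat_eq (u v x y c : nat) : (0 < u)%N -> (0 < v)%N ->
  (u * x + v * y = v * c)%N -> ((v%:R / u%:R)^-1 * x%:R + y%:R = c%:R :> rat).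
Proof.
move=> uP vP h; rewrite ratE // h natrM mulrC mulKf //.
by rewrite pnatr_eq0 -lt0n.
Qed.

Lemma Tconv (A B G D : nat) : (A < G)%N -> (D < B)%N ->
  (B%:R + A%:R * (B%:R - D%:R) / (G%:R - A%:R) : rat) =
  ((B - D) * G + (G - A) * D)%:R / (G - A)%:R.
Proof.
move=> ag db.
have -> : ((B - D) * G + (G - A) * D = (G - A) * B + A * (B - D))%N by nia.
have g0 : ((G - A)%:R : rat) != 0 by rewrite pnatr_eq0 subn_eq0 -ltnNge.
rewrite natrD !natrM !natrB ?(ltnW ag) ?(ltnW db) //.
rewrite natrB ?(ltnW ag) // in g0.
field; exact: g0.
Qed.

Lemma l1E (A B G D : nat) : (A < G)%N -> (D < B)%N ->
  ((G%:R - A%:R) / (B%:R - D%:R) : rat) = (G - A)%:R / (B - D)%:R.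
Proof. by move=> ag db; rewrite !natrB ?(ltnW ag) ?(ltnW db). Qed.


Theorem theorem3p3 (R : realType) (p : nat -> R[i]) (q : nat -> nat -> R[i])
    (delta : nat) (vs : seq (nat * nat)) :
  (* p(z) = a_delta z^delta + O(z^(delta+1)), a_delta <> 0, delta >= 1, holomorphic *)
  (1 <= delta)%N ->
  (forall i, (i < delta)%N -> p i = 0) -> p delta != 0 ->
  convergent1 p ->
  (* q(z,w) = sum_{i+j>=1} b_ij z^i w^j, holomorphic, not identically zero *)
  q 0%N 0%N = 0 -> convergent2 q -> (exists i j, q i j != 0) ->
  (* vs lists the vertices (n_1,m_1),...,(n_s,m_s) of N(q), n increasing, m decreasing *)
  sorted (fun a b : nat * nat => (a.1 < b.1)%N && (b.2 < a.2)%N) vs ->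
  (forall x y : R, is_vertex q x y <->
     exists2 v, v \in vs & x = (v.1)%:R /\ y = (v.2)%:R) ->
  let s := size vs in
  let gamma := vn vs s in
  let d := vm vs s in
  let l := l1 vs in
  let gam n := ((gamma_n gamma delta d n)%:R : rat) in
  (* Case 2 and d > 0 *)
  (1 < s)%N -> (delta%:R <= Tk vs s.-1 :> rat) -> (0 < d)%N ->
  [/\
   (* (1) *)
   (l <= 1 -> forall n, (1 <= n)%N -> is_order (Qn p q n) (gamma_n gamma delta d n + d ^ n)),
   (* (2) *)
   (1 < l -> forall n, (1 <= n)%N -> exists c, is_order (Qn p q n) c /\
       l^-1 * gam n + (d ^ n)%:R <= c%:R /\ c%:R < gam n + (d ^ n)%:R),
   (* (3) *)
   (1 < l -> ((0 < vn vs 1)%N \/ (2 < s)%N) -> forall n, (1 <= n)%N ->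
       exists c, is_order (Qn p q n) c /\ l^-1 * gam n + (d ^ n)%:R < c%:R),
   (* (4) *)
   (1 < l -> vn vs 1 = 0%N -> s = 2%N -> delta%:R < Tk vs s.-1 ->
       (exists c, is_order q c /\ l^-1 * gamma%:R + d%:R = c%:R) /\
       (forall n, (2 <= n)%N -> exists c, is_order (Qn p q n) c /\
            l^-1 * gam n + (d ^ n)%:R < c%:R)) &
   (* (5) *)
   (1 < l -> vn vs 1 = 0%N -> s = 2%N -> delta%:R = Tk vs s.-1 ->
       forall n, (1 <= n)%N -> exists c, is_order (Qn p q n) c /\
            l^-1 * gam n + (d ^ n)%:R = c%:R)].
Proof.
move=> dP p0 pd _ q00 _ qne Hsort HV s gamma d l gam s1 hT d0.
set G := gamma. set D := d.
set A := vn vs s.-1. set B := vm vs s.-1.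
have ag : (A < G)%N by exact: (AG Hsort s1).1.
have db : (D < B)%N by exact: (AG Hsort s1).2.
pose S : nat -> nat -> Prop := fun i j => is_true (q i j != 0).
have SF1 : forall i j, S i j -> (D <= j)%N by move=> i j H; have := F1 qne Hsort HV s1 H.
have SF2 : forall i j, S i j -> ((B - D) * G + (G - A) * D <= (B - D) * i + (G - A) * j)%N.
  by move=> i j H; have := F2 qne Hsort HV s1 H.
have Sgd : S G D by have := F3a qne Hsort HV s1.
have Sab : S A B by have := F3b qne Hsort HV s1.
have qj : forall i j, q i j != 0 -> (0 < j)%N by move=> i j /SF1; lia.
have TkE : Tk vs s.-1 = B%:R + A%:R * (B%:R - D%:R) / (G%:R - A%:R) by [].
have w2R : (0 : rat) < (G - A)%:R by rewrite ltr0n subn_gt0.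
have case2 : ((G - A) * delta <= (B - D) * G + (G - A) * D)%N.
  by move: hT; rewrite TkE Tconv // ler_pdivlMr // -natrM ler_nat mulnC.
have lE : l = (G - A)%:R / (B - D)%:R by rewrite /l /l1 l1E.
have w1P : (0 < B - D)%N by rewrite subn_gt0.
have w2P : (0 < G - A)%N by rewrite subn_gt0.
have ex2 : forall n, exists XY : nat * nat, isLM 1 1 (Qn p q n) XY.1 XY.2.
  move=> n; have [X [Y H]] := val_exists dP p0 pd qne qj 1 (ltn0Sn 0) n.
  by exists (X, Y).
have [f Hf] := boolp.choice ex2.
pose c n := ((f n).1 + (f n).2)%N.
have ord : forall n, is_order (Qn p q n) (c n) by move=> n; exact: LM_order (Hf n).
have c0 : c 0%N = 1%N.
  have [e1 e2] := LM_uniq (ltn0Sn 0) (Hf 0%N) (LM_w R 1 1).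
  by rewrite /c e1 e2.
have ph : forall X Y, phi 1 1 X Y = (X + Y)%N by move=> X Y; rewrite /phi !mul1n.
have crec1 : forall n, exists i j, S i j /\ c n.+1 = (i * delta ^ n + j * c n)%N.
  move=> n; have [[i [j [Sij e]]] _] := val_rec dP p0 pd qne qj (ltn0Sn 0) (Hf n) (Hf n.+1).
  by exists i, j; split => //; move: e; rewrite !ph mul1n.
have crec2 : forall n i j, S i j -> (c n.+1 <= i * delta ^ n + j * c n)%N.
  move=> n i j Sij; have [_ H] := val_rec dP p0 pd qne qj (ltn0Sn 0) (Hf n) (Hf n.+1).
  by move: (H i j Sij); rewrite !ph mul1n.
have w12of : 1 < l -> (B - D < G - A)%N.
  by rewrite lE ltr_pdivlMr ?ltr0n // mul1r ltr_nat.
split.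
- move=> l1 n n1.
  have w21 : (G - A <= B - D)%N.
    by move: l1; rewrite lE ler_pdivrMr ?ltr0n // mul1r ler_nat.
  have e := claim1 ag db d0 dP case2 SF1 SF2 Sgd c0 crec1 crec2 w21 n.
  by rewrite -e.
- move=> hl n n1; have w12 := w12of hl; exists (c n); split => //; split.
  + rewrite /gam -/G -/D lE qrat_le //; have h := claim2lo ag db d0 dP case2 SF1 SF2 c0 crec1 (ltnW w12) n; exact h.
  + rewrite /gam -natrD ltr_nat -/G -/D; have h := claim2hi ag db d0 dP case2 Sgd Sab c0 crec2 w12 n1; exact h.
- move=> hl H n n1; have w12 := w12of hl; exists (c n); split => //.
  rewrite /gam -/G -/D lE qrat_lt //.
  apply: (claim3 ag db d0 dP case2 SF1 SF2 c0 crec1 w12) => //.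
  move=> j S0j.
  have i0 : ((nth (0, 0) vs 0).1 <= 0)%N by have := F4 qne Hsort HV s1 S0j.
  case: H => [H|H].
    by exfalso; move: H; rewrite /vn /=; lia.
  have v0 : (nth (0%N, 0%N) vs 0).1 = 0%N by lia.
  have h1 := F5 qne Hsort HV s1 v0 S0j.
  have k0 : (0 < (size vs).-2)%N by rewrite /s in H; lia.
  have h2 := CONV Hsort HV s1 k0.
  rewrite v0 muln0 add0n in h2.
  apply: leq_trans h2 _; rewrite leq_mul2l h1 orbT //.
- move=> hl n10 s2 hT'; have w12 := w12of hl.
  have a0 : A = 0%N by rewrite /A s2.
  have lt' : ((G - A) * delta < (B - D) * G + (G - A) * D)%N.
    by move: hT'; rewrite TkE Tconv // ltr_pdivlMr // -natrM ltr_nat mulnC.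
  split.
    exists B; split.
      split; first by exists 0%N, B; split => //; rewrite -a0.
      move=> i j qij; have := SF2 i j qij; rewrite a0 subn0 in w12 *; nia.
    rewrite lE; apply: qrat_eq => //; rewrite a0 subn0; nia.
  move=> n n1; exists (c n); split => //.
  rewrite /gam -/G -/D lE qrat_lt //.
  by have [_ h] := claim4 ag db d0 dP case2 SF1 SF2 Sab c0 crec1 crec2 w12 a0 lt'; apply: h.
- move=> hl n10 s2 hT' n n1; have w12 := w12of hl.
  have a0 : A = 0%N by rewrite /A s2.
  have eqT : ((G - A) * delta = (B - D) * G + (G - A) * D)%N.
    move: hT'; rewrite TkE Tconv // => h.
    have : (delta%:R * (G - A)%:R : rat) = ((B - D) * G + (G - A) * D)%:R.
      by rewrite h mulfVK // gt_eqF.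
    by rewrite -natrM => /eqP; rewrite eqr_nat mulnC => /eqP.
  exists (c n); split => //.
  rewrite /gam -/G -/D lE; apply: qrat_eq => //.
  have h := claim5 ag db d0 dP case2 SF1 SF2 Sab c0 crec1 crec2 a0 eqT w12 n; exact h.
Qed.
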